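(* For every $k\ge 1$, letting $n=t_k=\frac{k(k+1)}{2}$ and $K_n$ the complete graph of order $n$, we have ${\rm I}_e(K_n)=|E(K_n)|-\frac{k(k+1)(k-1)(3k+2)}{24}$.
   Context: All graphs are finite and simple. A graph is locally irregular if no two adjacent vertices have the same degree. An edge-irregulator of a graph $G$ is a set $S\subseteq E(G)$ such that $G-S$ is locally irregular; ${\rm I}_e(G)$ is the minimum cardinality of an edge-irregulator of $G$. $t_k$ denotes the $k$-th triangular number $1+2+\dots+k$. *)

(* Defs.v *)
From mathcomp Require Import all_boot.
Set Implicit Arguments. Unset Strict Implicit. Unset Printing Implicit Defensive.

(* A finite simple graph on vertex type T is given by its edge set,
   a set of 2-element subsets of T. *)
Definition deg (T : finType) (E : {set {set T}}) (v : T) : nat :=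
  #|[set e in E | v \in e]|.

Definition locally_irregular (T : finType) (E : {set {set T}}) : Prop :=
  forall u v : T, u != v -> [set u; v] \in E -> deg E u != deg E v.

Definition edge_irregulator (T : finType) (E S : {set {set T}}) : Prop :=
  S \subset E /\ locally_irregular (E :\: S).

Definition is_Ie (T : finType) (E : {set {set T}}) (m : nat) : Prop :=
  (exists S, edge_irregulator E S /\ #|S| = m) /\
  (forall S, edge_irregulator E S -> m <= #|S|).

Definition complete_edges (n : nat) : {set {set 'I_n}} :=
  [set e : {set 'I_n} | #|e| == 2].

Definition tri (k : nat) : nat := (k * k.+1) %/ 2.

(* Main.v *)
Require Import Defs.
From mathcomp Require Import all_boot zify.
Set Implicit Arguments. Unset Strict Implicit. Unset Printing Implicit Defensive.

Lemma triS j : tri j.+1 = tri j + j.+1.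
Proof. rewrite /tri; nia. Qed.

Lemma tri2 k : 2 * tri k = k * k.+1.
Proof. elim: k => [//|k IH]; rewrite triS; nia. Qed.

Lemma tri_le i j : i <= j -> tri i <= tri j.
Proof. move=> h; rewrite /tri; apply: leq_div2r; apply: leq_mul => //. Qed.

Lemma tri_lt i j : i < j -> tri i.+1 <= tri j.
Proof. exact: tri_le. Qed.

Lemma k_le_tri k : k <= tri k.
Proof. have := tri2 k; nia. Qed.

Lemma card_sumb (T : finType) (P : pred T) : #|[set v | P v]| = \sum_v P v.
Proof.
rewrite -sum1_card big_mkcond /=; apply: eq_bigr => v _; rewrite inE.
by case: (P v).
Qed.

Lemma deg_sum (T : finType) (E : {set {set T}}) v : deg E v = \sum_(e in E) (v \in e).
Proof.
rewrite /deg -sum1_card big_mkcond /= [RHS]big_mkcond /=; apply: eq_bigr => e _.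
rewrite inE; by case: (e \in E); case: (v \in e).
Qed.

Lemma handshake (T : finType) (E : {set {set T}}) :
  (forall e, e \in E -> #|e| == 2) -> \sum_v deg E v = 2 * #|E|.
Proof.
move=> HE. under eq_bigr do rewrite deg_sum.
rewrite exchange_big /= mulnC -sum_nat_const big_mkcond [RHS]big_mkcond /=.
apply: eq_big => // e _; case: ifP => // eE.
have /eqP <- := HE e eE. rewrite -sum1_card [RHS]big_mkcond /=.
by apply: eq_bigr => v _; case: (v \in e).
Qed.

Lemma deg_bound (T : finType) (G : {set {set T}}) :
  (forall e, e \in G -> #|e| == 2) -> locally_irregular G -> forall v,
  deg G v + #|[set u | deg G u == deg G v]| <= #|T|.
Proof.
move=> HG HI v.
have sub : [set e in G | v \in e] \subset
   [set [set v; u] | u in ~: [set u | deg G u == deg G v]].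
{ apply/subsetP => e; rewrite inE => /andP [eG ve].
  have /cards2P [x [y [xy exy]]] := HG e eG.
  subst e. case/set2P: ve => ->.
  - apply/imsetP; exists y => //; rewrite !inE eq_sym; exact: HI.
  - apply/imsetP; exists x; last by rewrite setUC.
    by rewrite !inE; apply: HI. }
have h1 := subset_leq_card sub.
have h2 := leq_imset_card (fun u => [set v; u]) (~: [set u | deg G u == deg G v]).
have h3 := cardsC [set u | deg G u == deg G v].
have h0 : deg G v = #|[set e in G | v \in e]| by [].
by rewrite -h3 addnC leq_add2l h0; exact: leq_trans h1 h2.
Qed.

Lemma count_bound (T : finType) (G : {set {set T}}) :
  (forall e, e \in G -> #|e| == 2) -> locally_irregular G -> forall j,
  #|[set v | #|T| - deg G v == j]| <= j.
Proof.
move=> HG HI j.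
case: (set_0Vmem [set v | #|T| - deg G v == j]) => [-> | [v]]; first by rewrite cards0.
rewrite inE => /eqP fv.
have hv := deg_bound HG HI v.
have -> : [set u | #|T| - deg G u == j] = [set u | deg G u == deg G v].
  apply/setP => u; rewrite !inE -fv.
  have hu := deg_bound HG HI u.
  by apply/eqP/eqP => ?; lia.
lia.
Qed.

Lemma sum_min k x : \sum_(j < k) (j < x) = minn x k.
Proof. elim: k => [|k IH]; first by rewrite big_ord0; lia.
rewrite big_ord_recr /= IH; case: (ltnP k x) => h /=; lia. Qed.

Lemma sum_lower (T : finType) (f : T -> nat) :
  (forall j, #|[set v | f v == j]| <= j) -> forall k,
  \sum_(j < k) (#|T| - tri j) <= \sum_v f v.
Proof.
move=> H k.
have le_j : forall j, #|[set v | f v <= j]| <= tri j.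
{ elim => [|j IH].
  - have -> : [set v | f v <= 0] = [set v | f v == 0].
      by apply/setP => v; rewrite !inE leqn0.
    exact: H.
  - have -> : [set v | f v <= j.+1] = [set v | f v <= j] :|: [set v | f v == j.+1].
      by apply/setP => v; rewrite !inE leq_eqVlt ltnS orbC.
    rewrite cardsU triS; have := H j.+1; lia. }
have gt_j : forall j, #|T| - tri j <= #|[set v | j < f v]|.
{ move=> j; have -> : [set v | j < f v] = ~: [set v | f v <= j].
    by apply/setP => v; rewrite !inE ltnNge.
  have := cardsC [set v | f v <= j]; have := le_j j; lia. }
apply: (@leq_trans (\sum_(j < k) #|[set v | j < f v]|)).
  by apply: leq_sum => j _; apply: gt_j.
have -> : \sum_(j < k) #|[set v | j < f v]| = \sum_(j < k) \sum_v (j < f v) by apply: eq_bigr => j _; exact: card_sumb.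
rewrite exchange_big /=; apply: leq_sum => v _.
rewrite sum_min; lia.
Qed.

Lemma sum_tri k : 6 * \sum_(j < k) tri j = k.-1 * k * k.+1.
Proof. elim: k => [|k IH]; first by rewrite big_ord0.
rewrite big_ord_recr /= mulnDr IH; have := tri2 k; case: k {IH} => [|k] /=; nia. Qed.

Lemma upper (k : nat) (G : {set {set 'I_(tri k)}}) : 1 <= k ->
  (forall e, e \in G -> #|e| == 2) -> locally_irregular G ->
  #|G| <= (k * k.+1 * k.-1 * (3 * k + 2)) %/ 24.
Proof.
move=> k1 HG HI.
set n := tri k.
have hs := handshake HG.
pose f v := n - deg G v.
have hf : forall j, #|[set v | f v == j]| <= j.
  by move=> j; have := count_bound HG HI j; rewrite card_ord.
have hl := sum_lower hf k.
rewrite card_ord in hl.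
have hsum : \sum_v deg G v + \sum_v f v = n * n.
{ rewrite -big_split /= -[X in _ = X * _]card_ord -sum_nat_const.
  apply: eq_bigr => v _; rewrite /f; have := deg_bound HG HI v; rewrite card_ord.
  lia. }
have hL : \sum_(j < k) (n - tri j) + \sum_(j < k) tri j = k * n.
{ rewrite -big_split /= -[X in _ = X * _]card_ord -sum_nat_const.
  apply: eq_bigr => j _; have := tri_le (ltnW (ltn_ord j)); rewrite /n; lia. }
have h6 := sum_tri k.
have ht := tri2 k.
rewrite leq_divRL //.
move: hs hl hsum hL h6 ht; rewrite -/n.
set g := #|G|; set L := \sum_(j < k) (n - tri j); set s := \sum_(j < k) tri j.
set D := \sum_v deg G v; set F := \sum_v f v.
clearbody n g L s D F.
clear hf f HI HG G. case: k k1 => // k _ /=. nia.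
Qed.

Definition pp (v : nat) : nat := count (fun j => tri j.+1 <= v) (iota 0 v.+1).

Lemma count_lt_iota i m : i <= m -> count (fun j => j < i) (iota 0 m) = i.
Proof.
move=> h; rewrite -(subnKC h) iotaD count_cat.
rewrite (@eq_in_count _ (fun j => j < i) predT (iota 0 i)); last first.
  move=> j; rewrite mem_iota add0n; case/andP => _ hj; by rewrite /= hj.
rewrite count_predT size_iota (@eq_in_count _ _ pred0) ?count_pred0 ?addn0 //.
move=> j; rewrite mem_iota add0n; case/andP => hj _.
by rewrite ltnNge hj.
Qed.

Lemma window_ex m v : v < tri m -> exists2 i, i < m & tri i <= v < tri i.+1.
Proof.
elim: m => [//|m IH] h.
case: (ltnP v (tri m)) => h2.
- by case: (IH h2) => i h3 h4; exists i => //; apply: ltnW.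
- by exists m => //; rewrite h2 h.
Qed.

Lemma window_uniq i i' v : tri i <= v < tri i.+1 -> tri i' <= v < tri i'.+1 -> i = i'.
Proof.
case/andP=> a b /andP[c d].
case: (ltngtP i i') => // h.
- by have := tri_lt h; lia.
- by have := tri_lt h; lia.
Qed.

Lemma pp_win i v : tri i <= v < tri i.+1 -> pp v = i.
Proof.
move=> hw; rewrite /pp (@eq_in_count _ _ (fun j => j < i)).
  apply: count_lt_iota; have := k_le_tri i; case/andP: hw; lia.
move=> j _ /=; case/andP: hw => h1 h2.
case: (ltnP j i) => h.
- have := @tri_le j.+1 i h; lia.
- have := @tri_le i.+1 j.+1 h; lia.
Qed.

Definition G0 k : {set {set 'I_(tri k)}} :=
  [set e | [exists u : 'I_(tri k), exists w : 'I_(tri k), (pp u != pp w) && (e == [set u; w])]].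

Lemma pp_lt k (v : 'I_(tri k)) : pp v < k.
Proof. by case: (window_ex (ltn_ord v)) => i hi hw; rewrite (pp_win hw). Qed.

Lemma class_eq k (v : 'I_(tri k)) i : (pp v == i) = (tri i <= v < tri i.+1).
Proof.
case: (window_ex (ltn_ord v)) => i0 _ hw; rewrite (pp_win hw).
by apply/eqP/idP => [<- // | h]; exact: window_uniq hw h.
Qed.

Lemma sum_interval n a b : \sum_(u < n) (a <= u < b) = minn n b - minn n a.
Proof.
elim: n => [|n IH]; first by rewrite big_ord0; lia.
rewrite big_ord_recr /= IH.
by case: (leqP a n) => ha; case: (ltnP n b) => hb /=; lia.
Qed.

Lemma class_card k i : i < k -> #|[set v : 'I_(tri k) | pp v == i]| = i.+1.
Proof.
move=> hi; rewrite card_sumb.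
under eq_bigr => v _ do rewrite class_eq.
rewrite sum_interval.
have := @tri_le i.+1 k hi; have := @tri_le i k (ltnW hi); rewrite triS; lia.
Qed.

Lemma edges_at k (v : 'I_(tri k)) :
  [set e in G0 k | v \in e] = [set [set v; u] | u in [set u : 'I_(tri k) | pp u != pp v]].
Proof.
apply/setP => e; rewrite !inE; apply/andP/imsetP.
- case=> /existsP [u /existsP [w /andP [h /eqP ee]]]; subst e.
  case/set2P => ->.
  + by exists w => //; rewrite inE eq_sym.
  + by exists u; [rewrite inE | rewrite setUC].
- case=> x; rewrite inE => hx ->; split; last by rewrite set21.
  by apply/existsP; exists v; apply/existsP; exists x; rewrite eq_sym hx eqxx.
Qed.

Lemma deg_G0 k (v : 'I_(tri k)) : deg (G0 k) v = tri k - (pp v).+1.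
Proof.
rewrite /deg edges_at card_in_imset; last first.
  move=> x y; rewrite !inE => hx hy exy.
  have : x \in [set v; y] by rewrite -exy set22.
  case/set2P => // hxv; by move: hx; rewrite hxv eqxx.
have -> : [set u : 'I_(tri k) | pp u != pp v] = ~: [set u : 'I_(tri k) | pp u == pp v].
  by apply/setP => u; rewrite !inE.
have := cardsC [set u : 'I_(tri k) | pp u == pp v].
rewrite class_card ?pp_lt // card_ord; lia.
Qed.

Lemma G0_sub k e : e \in G0 k -> #|e| == 2.
Proof.
rewrite inE => /existsP [u /existsP [w /andP [h /eqP ->]]].
have uw : u != w by apply: contraNneq h => ->. by rewrite cards2 uw.
Qed.

Lemma G0_irr k : locally_irregular (G0 k).
Proof.
move=> u v uv e.
have : [set u; v] \in [set e in G0 k | u \in e] by rewrite inE e set21.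
rewrite edges_at => /imsetP [x]; rewrite inE => hx exy.
have : v \in [set u; x] by rewrite -exy set22.
case/set2P => hv; first by rewrite hv eqxx in uv.
subst x. rewrite !deg_G0.
have := pp_lt u; have := pp_lt v; have := k_le_tri k.
move: hx; case: eqP => // hne _ h1 h2 h3.
apply/eqP => hh; apply: hne; lia.
Qed.

Lemma sum_pp k (F : nat -> nat) :
  \sum_(v : 'I_(tri k)) F (pp v) = \sum_(i < k) i.+1 * F i.
Proof.
have per : forall x, x < k -> \sum_(i < k) (x == i) * F i = F x.
{ move=> x hx; rewrite (bigD1 (Ordinal hx)) //= eqxx mul1n big1 ?addn0 //.
  move=> i hi; case: eqP => // hxi; exfalso; move/negP: hi; apply.
  by apply/eqP; apply: val_inj; rewrite /= hxi. }
transitivity (\sum_(v : 'I_(tri k)) \sum_(i < k) (pp v == i) * F i).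
  by apply: eq_bigr => v _; rewrite per // pp_lt.
rewrite exchange_big; apply: eq_bigr => i _ /=.
by rewrite -big_distrl /= -card_sumb class_card.
Qed.

Lemma sum_id k : \sum_(i < k) i.+1 = tri k.
Proof. elim: k => [|k IH]; first by rewrite big_ord0. by rewrite big_ord_recr /= IH triS. Qed.

Lemma sum_sq k : 6 * \sum_(i < k) (i.+1 * i.+1) = k * k.+1 * (2 * k + 1).
Proof. elim: k => [|k IH]; first by rewrite big_ord0. rewrite big_ord_recr /= mulnDr IH; nia. Qed.

Lemma card_G0 k : 1 <= k -> #|G0 k| = (k * k.+1 * k.-1 * (3 * k + 2)) %/ 24.
Proof.
move=> k1.
have hs := handshake (@G0_sub k).
have hd : \sum_(v : 'I_(tri k)) deg (G0 k) v = \sum_(v : 'I_(tri k)) (fun x => tri k - x.+1) (pp v).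
  by apply: eq_bigr => v _; rewrite deg_G0.
rewrite hd (@sum_pp k (fun x => tri k - x.+1)) /= in hs.
have hsplit : \sum_(i < k) i.+1 * (tri k - i.+1) + \sum_(i < k) i.+1 * i.+1 = tri k * tri k.
{ have -> : tri k * tri k = \sum_(i < k) (i.+1 * tri k) by rewrite -big_distrl /= sum_id.
  rewrite -big_split; apply: eq_bigr => i _ /=.
  rewrite -mulnDr subnK //; apply: leq_trans (k_le_tri k); exact: ltn_ord. }
have h6 := sum_sq k. have ht := tri2 k.
move: hs hsplit h6 ht.
set g := #|G0 k|; set A := \sum_(i < k) i.+1 * (tri k - i.+1);
set Q := \sum_(i < k) i.+1 * i.+1; set n := tri k.
clearbody g A Q n => hs hsplit h6 ht.
suff -> : k * k.+1 * k.-1 * (3 * k + 2) = g * 24 by rewrite mulnK.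
clear hd. case: k k1 h6 ht => // k _ /= h6 ht. nia.
Qed.

Theorem theorem10 (k : nat) : 1 <= k ->
  is_Ie (complete_edges (tri k))
    (#|complete_edges (tri k)| - (k * k.+1 * k.-1 * (3 * k + 2)) %/ 24).
Proof.
move=> k1.
have G0E : G0 k \subset complete_edges (tri k).
  by apply/subsetP => e he; rewrite /complete_edges inE; exact: G0_sub.
split.
- exists (complete_edges (tri k) :\: G0 k); split; [split|].
  + exact: subsetDl.
  + have -> : complete_edges (tri k) :\: (complete_edges (tri k) :\: G0 k) = G0 k.
      apply/setP => e; rewrite !in_setD.
      have hc : (e \in complete_edges (tri k)) = (#|e| == 2) by rewrite /complete_edges inE.
      rewrite hc.
      case h: (e \in G0 k); first by rewrite (G0_sub h).
      by case: (#|e| == 2).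
    exact: G0_irr.
  + by rewrite cardsD (setIidPr G0E) card_G0.
- move=> S [hS hI].
  have sub : forall e, e \in complete_edges (tri k) :\: S -> #|e| == 2.
    by move=> e; rewrite /complete_edges !inE => /andP [_ ->].
  have := upper k1 sub hI.
  rewrite cardsD (setIidPr hS).
  lia.
Qed.
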